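(* Let $d,s\in\mathbb{N}_{\ge1}$, let $\boldsymbol\alpha\in\mathbb{N}_{\ge0}^d$ with $\sum_{i=1}^d\alpha_i=\bar\alpha$, and write $a:=\lceil\log_2\bar\alpha\rceil$. For any $0<\epsilon\le\frac{3^{a}-1}{3^{a-1}-1}$ (read as $+\infty$ when $3^{a-1}-1=0$), there exists a ReLU FNN function $f^{(mnm)}_{FF}:\mathbb{R}^d\to\mathbb{R}$ with width $21\cdot2^{a-1}$, depth $C\ln\frac{3^{a}-1}{2\epsilon}$ and weight bound $C$, where $C$ is a constant independent of $\epsilon$, such that for all $\boldsymbol x\in[0,1]^d$, $$|f^{(mnm)}_{FF}(\boldsymbol x)-x_1^{\alpha_1}x_2^{\alpha_2}\cdots x_d^{\alpha_d}|\le\epsilon.$$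
   Context: ReLU FNN of depth $L$, width $W$: $f_0=x$, $f_l=\sigma_R(W_lf_{l-1}+b_l)$ ($1\le l\le L-1$), $f=W_Lf_{L-1}+b_L$ with hidden layers of width $W$, $\sigma_R(x)=\max\{x,0\}$; the weight bound is the maximum absolute value of all weights and biases. *)

(* Defs.v *)
From Stdlib Require Import Reals Lra Lia.
Open Scope R_scope.

Definition relu (x : R) : R := Rmax x 0.

Fixpoint rsum (n : nat) (f : nat -> R) : R :=
  match n with
  | O => 0
  | S k => rsum k f + f k
  end.

(* A ReLU FNN with input dimension d, hidden width W, depth L is given by
   weights  wt l i j  (layer l = 1..L, row i, column j) and biases  bs l i.
   Layer l has input dimension d if l = 1 and W otherwise, and output
   dimension 1 if l = L and W otherwise. Entries outside these ranges are
   never used. *)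
Definition in_dim (d W l : nat) : nat := if Nat.eqb l 1 then d else W.
Definition out_dim (W L l : nat) : nat := if Nat.eqb l L then 1%nat else W.

Fixpoint hidden (d W : nat) (wt : nat -> nat -> nat -> R) (bs : nat -> nat -> R)
  (x : nat -> R) (l : nat) : nat -> R :=
  match l with
  | O => x
  | S k => fun i =>
      relu (rsum (in_dim d W (S k)) (fun j => wt (S k) i j * hidden d W wt bs x k j)
            + bs (S k) i)
  end.

Definition realize (d W L : nat) (wt : nat -> nat -> nat -> R) (bs : nat -> nat -> R)
  (x : nat -> R) : R :=
  rsum (in_dim d W L) (fun j => wt L O j * hidden d W wt bs x (L - 1) j) + bs L O.

Definition weight_bounded (d W L : nat) (wt : nat -> nat -> nat -> R)
  (bs : nat -> nat -> R) (B : R) : Prop :=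
  forall l, (1 <= l <= L)%nat ->
    forall i, (i < out_dim W L l)%nat ->
      Rabs (bs l i) <= B /\
      forall j, (j < in_dim d W l)%nat -> Rabs (wt l i j) <= B.

Fixpoint nsum (n : nat) (f : nat -> nat) : nat :=
  match n with O => O | S k => (nsum k f + f k)%nat end.

Fixpoint monomial (n : nat) (alpha : nat -> nat) (x : nat -> R) : R :=
  match n with O => 1 | S k => monomial k alpha x * x k ^ alpha k end.

Definition eps_admissible (a : nat) (eps : R) : Prop :=
  0 < eps /\
  (3 ^ (a - 1) - 1 <> 0 -> eps <= (3 ^ a - 1) / (3 ^ (a - 1) - 1)).

(* Main.v *)
Require Import Defs.
From Stdlib Require Import Reals.
From Stdlib Require Import Lra Lia ZArith List.
Import ListNotations.
Open Scope R_scope.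

Lemma relu_pos x : 0 <= x -> relu x = x.
Proof. intros; unfold relu; apply Rmax_left; lra. Qed.
Lemma relu_neg x : x <= 0 -> relu x = 0.
Proof. intros; unfold relu; apply Rmax_right; lra. Qed.
Lemma relu_ge0 x : 0 <= relu x.
Proof. unfold relu; apply Rmax_r. Qed.

Definition lin_coef (ts : list (R*nat)) (j : nat) : R :=
  fold_right (fun t acc => (if Nat.eqb j (snd t) then fst t else 0) + acc) 0 ts.
Definition lin_eval (ts : list (R*nat)) (h : nat -> R) : R :=
  fold_right (fun t acc => fst t * h (snd t) + acc) 0 ts.
Definition lin_abs (ts : list (R*nat)) : R :=
  fold_right (fun t acc => Rabs (fst t) + acc) 0 ts.

Lemma rsum_ext n f g : (forall j, (j < n)%nat -> f j = g j) -> rsum n f = rsum n g.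
Proof. induction n; simpl; intros; auto. rewrite IHn by (intros; apply H; lia). rewrite H by lia. auto. Qed.
Lemma rsum_plus n f g : rsum n (fun j => f j + g j) = rsum n f + rsum n g.
Proof. induction n; simpl; [lra| rewrite IHn; lra]. Qed.
Lemma rsum_zero n : rsum n (fun _ => 0) = 0.
Proof. induction n; simpl; [lra| rewrite IHn; lra]. Qed.
Lemma rsum_delta n c w h : (c < n)%nat ->
  rsum n (fun j => (if Nat.eqb j c then w else 0) * h j) = w * h c.
Proof.
  induction n; intros Hc; [lia|]. simpl.
  destruct (Nat.eqb_spec n c).
  - subst. rewrite (rsum_ext _ _ (fun _ => 0)). rewrite rsum_zero; lra.
    intros j Hj. destruct (Nat.eqb_spec j c); [lia| lra].
  - rewrite IHn by lia. lra.
Qed.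

Lemma rsum_lin n ts h : (forall t, In t ts -> (snd t < n)%nat) ->
  rsum n (fun j => lin_coef ts j * h j) = lin_eval ts h.
Proof.
  induction ts as [|[w c] ts IH]; intros Hin; simpl.
  - rewrite (rsum_ext _ _ (fun _ => 0)) by (intros; lra). apply rsum_zero.
  - rewrite (rsum_ext _ _ (fun j => (if Nat.eqb j c then w else 0) * h j + lin_coef ts j * h j))
      by (intros; simpl; ring).
    rewrite rsum_plus, rsum_delta, IH; [reflexivity| |].
    + intros; apply Hin; simpl; auto.
    + apply (Hin (w,c)); simpl; auto.
Qed.

Lemma lin_coef_bound ts j : Rabs (lin_coef ts j) <= lin_abs ts.
Proof.
  induction ts as [|[w c] ts IH]; simpl.
  - rewrite Rabs_R0; lra.
  - eapply Rle_trans; [apply Rabs_triang|].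
    destruct (Nat.eqb j c); [|rewrite Rabs_R0; pose proof (Rabs_pos w)]; lra.
Qed.

Definition gt (y : R) : R := 2 * relu y - 4 * relu (y - 1/2).
Fixpoint ys (u : R) (s : nat) : R := match s with O => u | S k => gt (ys u k) end.
Fixpoint acc (u : R) (s : nat) : R :=
  match s with O => u | S k => acc u k - gt (ys u k) * (/4) ^ (S k) end.

Lemma gt_prop y : 0 <= y <= 1 -> 0 <= gt y <= 1 /\ y - y*y = gt y / 4 + (gt y - gt y * gt y)/4.
Proof.
  intros Hy; unfold gt. destruct (Rle_lt_dec y (1/2)).
  - rewrite (relu_pos y), (relu_neg (y-1/2)) by lra. split; [lra| field].
  - rewrite (relu_pos y), (relu_pos (y-1/2)) by lra. split; [lra| field].
Qed.

Lemma acc_prop u s : 0 <= u <= 1 ->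
  0 <= ys u s <= 1 /\ acc u s = u*u + (ys u s - ys u s * ys u s) * (/4)^s.
Proof.
  intros Hu; induction s as [|s [IH1 IH2]]; simpl.
  - split; [lra| field].
  - destruct (gt_prop _ IH1) as [G1 G2]. split; auto.
    rewrite IH2. rewrite G2. field.
Qed.

Lemma acc_bound u m : 0 <= u <= 1 -> 0 <= acc u m - u*u <= (/4)^m / 4.
Proof.
  intros Hu. destruct (acc_prop u m Hu) as [H1 H2]. rewrite H2.
  assert (0 < (/4)^m) by (apply pow_lt; lra).
  set (y := ys u m) in *. assert (0 <= y - y*y <= 1/4).
  { split. - assert (0 <= y * (1 - y)) by (apply Rmult_le_pos; lra). lra.
    - assert (0 <= (y - 1/2)*(y-1/2)) by apply Rle_0_sqr. lra. }
  replace (u * u + (y - y * y) * (/ 4) ^ m - u * u) with ((y - y*y) * (/4)^m) by ring.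
  split; nra.
Qed.

Lemma acc_nonneg u s : 0 <= u <= 1 -> 0 <= acc u s.
Proof.
  intros Hu. destruct (acc_prop u s Hu) as [H1 H2]. rewrite H2.
  assert (0 < (/4)^s) by (apply pow_lt; lra). set (y := ys u s) in *. assert (0 <= y * (1 - y)) by (apply Rmult_le_pos; lra).
  assert (0 <= u * u) by apply Rle_0_sqr.
  assert (0 <= (y - y*y) * (/4)^s) by (apply Rmult_le_pos; lra). lra.
Qed.

Definition uval (p z : R) (j : nat) : R :=
  match j with O => (p+z)/2 | S O => p/2 | _ => z/2 end.

Lemma uval_range p z j : 0 <= p <= 1 -> 0 <= z <= 1 -> 0 <= uval p z j <= 1.
Proof. intros; destruct j as [|[|j]]; simpl; lra. Qed.

Definition clampv (v : R) : R := relu v - relu (v - 1).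

Lemma clamp_prop v t : 0 <= t <= 1 -> 0 <= clampv v <= 1 /\ Rabs (clampv v - t) <= Rabs (v - t).
Proof.
  intros Ht; unfold clampv.
  destruct (Rle_lt_dec v 0).
  - rewrite (relu_neg v), (relu_neg (v-1)) by lra. split; [lra|].
    rewrite !Rabs_left1 by lra; lra.
  - destruct (Rle_lt_dec v 1).
    + rewrite (relu_pos v), (relu_neg (v-1)) by lra. split; [lra|]. replace (v - 0 - t) with (v - t) by ring; lra.
    + rewrite (relu_pos v), (relu_pos (v-1)) by lra. split; [lra|].
      replace (v - (v-1) - t) with (1 - t) by ring.
      rewrite !Rabs_pos_eq by lra. lra.
Qed.

Lemma mult_err p z m : 0 <= p <= 1 -> 0 <= z <= 1 ->
  Rabs (2 * acc (uval p z 0) m - 2 * acc (uval p z 1) m - 2 * acc (uval p z 2) m - p * z) <= (/4)^m.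
Proof.
  intros Hp Hz.
  pose proof (acc_bound (uval p z 0) m (uval_range p z 0 Hp Hz)) as A0.
  pose proof (acc_bound (uval p z 1) m (uval_range p z 1 Hp Hz)) as A1.
  pose proof (acc_bound (uval p z 2) m (uval_range p z 2 Hp Hz)) as A2.
  simpl in *.
  set (a0 := acc ((p+z)/2) m) in *. set (a1 := acc (p/2) m) in *. set (a2 := acc (z/2) m) in *.
  set (q := (/4)^m) in *.
  assert (E : 2 * a0 - 2 * a1 - 2 * a2 - p * z =
     2 * (a0 - (p+z)/2*((p+z)/2)) - 2 * (a1 - p/2*(p/2)) - 2*(a2 - z/2*(z/2))) by field.
  rewrite E. unfold Rabs; destruct Rcase_abs; lra.
Qed.

Definition uterms (K q j : nat) : list (R*nat) :=
  match j with
  | O => [(1/2, K); (-1/2, (K+1)%nat); (1/2, q)]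
  | S O => [(1/2, K); (-1/2, (K+1)%nat)]
  | _ => [(1/2, q)]
  end.

Definition cterms (K : nat) : list (R*nat) := [(2, (K+2)%nat); (-2, (K+3)%nat); (-2, (K+4)%nat)].

Definition BT (K m q r i : nat) : list (R*nat) :=
  if Nat.ltb i K then [(1, i)]
  else if Nat.eqb i K then (if Nat.eqb r (m+1) then cterms K else [])
  else if Nat.eqb i (K+1) then (if Nat.eqb r (m+1) then cterms K else [])
  else if Nat.ltb i (K+5) then
    (if Nat.eqb r 0 then uterms K q (i-(K+2)) else if Nat.eqb r (m+1) then []
     else [(1, i); (-2 * (/4)^r, (i+3)%nat); (4 * (/4)^r, (i+6)%nat)])
  else if Nat.ltb i (K+8) then
    (if Nat.eqb r 0 then uterms K q (i-(K+5)) else if Nat.eqb r (m+1) then []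
     else [(2, i); (-4, (i+3)%nat)])
  else if Nat.ltb i (K+11) then
    (if Nat.eqb r 0 then uterms K q (i-(K+8)) else if Nat.eqb r (m+1) then []
     else [(2, (i-3)%nat); (-4, i)])
  else [].

Definition BB (K m r i : nat) : R :=
  if Nat.ltb i K then 0
  else if Nat.eqb i K then 0
  else if Nat.eqb i (K+1) then (if Nat.eqb r (m+1) then -1 else 0)
  else if Nat.ltb i (K+8) then 0
  else if Nat.ltb i (K+11) then (if Nat.eqb r (m+1) then 0 else -1/2)
  else 0.

Definition IT (K : nat) (sg : nat -> nat) (i : nat) : list (R*nat) :=
  if Nat.ltb i K then [(1, sg i)] else if Nat.eqb i K then [(1, sg O)] else [].
Definition OT (K i : nat) : list (R*nat) :=
  if Nat.eqb i 0 then [(1, K); (-1, (K+1)%nat)] else [].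

Definition T (K m L : nat) (sg : nat -> nat) (l i : nat) : list (R*nat) :=
  if Nat.eqb l 1 then IT K sg i
  else if Nat.eqb l L then OT K i
  else BT K m (Nat.min ((l-2)/(m+2)+1) (K-1)) ((l-2) mod (m+2)) i.

Definition Bs (K m L : nat) (l i : nat) : R :=
  if Nat.eqb l 1 then 0 else if Nat.eqb l L then 0
  else BB K m ((l-2) mod (m+2)) i.

Ltac nat_cases := repeat match goal with
 | |- context [Nat.ltb ?a ?b] => destruct (Nat.ltb_spec a b); try (exfalso; lia)
 | |- context [Nat.eqb ?a ?b] => destruct (Nat.eqb_spec a b); try (exfalso; lia)
 end.

Lemma uterms_ok K q j t : In t (uterms K q j) -> (snd t <= K+1)%nat \/ snd t = q.
Proof.
  destruct j as [|[|j]]; simpl; intros H;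
  repeat match goal with
  | H : _ \/ _ |- _ => destruct H
  | H : False |- _ => destruct H
  | H : (_, _) = t |- _ => subst t end; simpl; lia.
Qed.

Lemma T_ok d W K m L sg : (1 <= K)%nat -> (K + 11 <= W)%nat -> (forall i, (sg i < d)%nat) ->
  forall l i t, In t (T K m L sg l i) -> (snd t < in_dim d W l)%nat.
Proof.
  intros HK HW Hsg l i t Hin. unfold in_dim. unfold T, IT, OT, BT, cterms in Hin.
  revert Hin.
  nat_cases; intros Hin;
  try (apply uterms_ok in Hin; pose proof (Nat.le_min_r ((l - 2) / (m + 2) + 1) (K - 1)); lia);
  simpl in Hin;
  repeat match goal with
  | H : _ \/ _ |- _ => destruct H
  | H : False |- _ => destruct H
  | H : (_, _) = t |- _ => subst t
  end; simpl; try lia; try (apply Hsg).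
Qed.

Lemma inv4_pow r : 0 < (/4)^r <= 1.
Proof.
  split. apply pow_lt; lra.
  rewrite <- (pow1 r). apply pow_incr. lra.
Qed.

Ltac rabs_solve := unfold Rabs; repeat destruct Rcase_abs; lra.

Lemma T_abs K m L sg l i : lin_abs (T K m L sg l i) <= 8.
Proof.
  unfold T, IT, OT, BT, cterms.
  pose proof (inv4_pow ((l - 2) mod (m + 2))).
  repeat (match goal with
  | |- context [Nat.ltb ?a ?b] => destruct (Nat.ltb a b); cbv iota
  | |- context [Nat.eqb ?a ?b] => destruct (Nat.eqb a b); cbv iota
  | |- context [uterms _ _ ?j] => destruct j as [|[|?]]; unfold uterms
  end); simpl lin_abs; rabs_solve.
Qed.

Lemma Bs_abs K m L l i : Rabs (Bs K m L l i) <= 8.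
Proof.
  unfold Bs, BB.
  repeat (match goal with
  | |- context [Nat.ltb ?a ?b] => destruct (Nat.ltb a b); cbv iota
  | |- context [Nat.eqb ?a ?b] => destruct (Nat.eqb a b); cbv iota
  end); rabs_solve.
Qed.

Lemma hidden_eq d W K m L sg bs x :
  (1 <= K)%nat -> (K + 11 <= W)%nat -> (forall i, (sg i < d)%nat) ->
  forall l i,
  hidden d W (fun l i j => lin_coef (T K m L sg l i) j) bs x (S l) i =
  relu (lin_eval (T K m L sg (S l) i) (hidden d W (fun l i j => lin_coef (T K m L sg l i) j) bs x l)
        + bs (S l) i).
Proof.
  intros HK HW Hsg l i. simpl hidden at 1. f_equal. f_equal.
  apply rsum_lin. intros t Ht. eapply T_ok; eauto.
Qed.

Lemma decode_div b m r : (r < m + 2)%nat -> (((2 + b*(m+2) + r) - 2) / (m+2) = b)%nat.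
Proof.
  intros Hr. replace (2 + b*(m+2) + r - 2)%nat with (r + b*(m+2))%nat by lia.
  rewrite Nat.div_add by lia. rewrite Nat.div_small by lia. lia.
Qed.
Lemma decode_mod b m r : (r < m + 2)%nat -> (((2 + b*(m+2) + r) - 2) mod (m+2) = r)%nat.
Proof.
  intros Hr. replace (2 + b*(m+2) + r - 2)%nat with (r + b*(m+2))%nat by lia.
  rewrite Nat.Div0.mod_add. apply Nat.mod_small; lia.
Qed.

Lemma T_block K m L sg b r i : (r < m + 2)%nat -> (2 + b*(m+2) + r <> L)%nat ->
  T K m L sg (2 + b*(m+2) + r) i = BT K m (Nat.min (b+1) (K-1)) r i /\
  Bs K m L (2 + b*(m+2) + r) i = BB K m r i.
Proof.
  intros Hr HL. unfold T, Bs.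
  destruct (Nat.eqb_spec (2 + b*(m+2) + r) 1); [lia|].
  destruct (Nat.eqb_spec (2 + b*(m+2) + r) L); [lia|].
  rewrite decode_div, decode_mod by lia. split; reflexivity.
Qed.

Lemma BT_fac K m q r i : (i < K)%nat -> BT K m q r i = [(1, i)] /\ BB K m r i = 0.
Proof. intros; unfold BT, BB; nat_cases; auto. Qed.

Lemma BT_P1 K m q : BT K m q (m+1) K = cterms K /\ BB K m (m+1) K = 0.
Proof. unfold BT, BB; nat_cases; auto. Qed.
Lemma BT_P2 K m q : BT K m q (m+1) (K+1) = cterms K /\ BB K m (m+1) (K+1) = -1.
Proof. unfold BT, BB; nat_cases; auto. Qed.

Lemma BT_init K m q j : (j < 3)%nat ->
  BT K m q 0 (K+2+j) = uterms K q j /\ BB K m 0 (K+2+j) = 0 /\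
  BT K m q 0 (K+5+j) = uterms K q j /\ BB K m 0 (K+5+j) = 0 /\
  BT K m q 0 (K+8+j) = uterms K q j /\ BB K m 0 (K+8+j) = -1/2.
Proof.
  intros Hj; unfold BT, BB; nat_cases;
  repeat split; f_equal; lia.
Qed.

Lemma BT_step K m q r j : (j < 3)%nat -> r <> 0%nat -> r <> (m+1)%nat ->
  BT K m q r (K+2+j) = [(1, (K+2+j)%nat); (-2 * (/4)^r, (K+5+j)%nat); (4 * (/4)^r, (K+8+j)%nat)]
  /\ BB K m r (K+2+j) = 0 /\
  BT K m q r (K+5+j) = [(2, (K+5+j)%nat); (-4, (K+8+j)%nat)] /\ BB K m r (K+5+j) = 0 /\
  BT K m q r (K+8+j) = [(2, (K+5+j)%nat); (-4, (K+8+j)%nat)] /\ BB K m r (K+8+j) = -1/2.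
Proof.
  intros Hj H0 H1; unfold BT, BB; nat_cases;
  assert (E1: (K+2+j+3 = K+5+j)%nat) by lia. assert (E2: (K+2+j+6 = K+8+j)%nat) by lia. assert (E3: (K+5+j+3 = K+8+j)%nat) by lia. assert (E4: (K+8+j-3 = K+5+j)%nat) by lia. rewrite ?E1, ?E2, ?E3, ?E4. repeat split.
Qed.

Fixpoint flist (n : nat) (alpha : nat -> nat) : list nat :=
  match n with O => [] | S k => flist k alpha ++ repeat k (alpha k) end.

Lemma flist_len n alpha : length (flist n alpha) = nsum n alpha.
Proof. induction n; simpl; auto. rewrite length_app, repeat_length. lia. Qed.

Lemma flist_lt n alpha j : In j (flist n alpha) -> (j < n)%nat.
Proof.
  induction n; simpl; intros H; [destruct H|].
  apply in_app_or in H. destruct H as [H|H]. apply IHn in H; lia.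
  apply repeat_spec in H. lia.
Qed.

Definition prodl (l : list R) : R := fold_right Rmult 1 l.
Lemma prodl_app l1 l2 : prodl (l1 ++ l2) = prodl l1 * prodl l2.
Proof. induction l1; simpl; [ring| rewrite IHl1; ring]. Qed.
Lemma prodl_rep (v : R) n : prodl (repeat v n) = v ^ n.
Proof. induction n; simpl; auto. rewrite IHn; auto. Qed.

Lemma monomial_prodl n alpha x : monomial n alpha x = prodl (map x (flist n alpha)).
Proof.
  induction n; simpl; auto.
  rewrite map_app, prodl_app, IHn, map_repeat, prodl_rep. auto.
Qed.

Fixpoint prodn (n : nat) (f : nat -> R) : R :=
  match n with O => 1 | S k => prodn k f * f k end.

Lemma prodn_ext n f g : (forall j, (j < n)%nat -> f j = g j) -> prodn n f = prodn n g.
Proof. induction n; simpl; intros; auto. rewrite IHn by (intros; apply H; lia). rewrite H by lia. auto. Qed.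

Lemma prodl_prodn (x : nat -> R) l : prodl (map x l) = prodn (length l) (fun j => x (nth j l O)).
Proof.
  induction l as [|a l IH] using rev_ind; simpl; auto.
  rewrite map_app, prodl_app, IH, length_app. simpl.
  replace (length l + 1)%nat with (S (length l)) by lia. simpl.
  rewrite app_nth2 by lia. rewrite Nat.sub_diag. simpl.
  f_equal; [|ring].
  apply prodn_ext. intros j Hj. rewrite app_nth1 by lia. auto.
Qed.

Lemma prodn_range n f : (forall j, (j < n)%nat -> 0 <= f j <= 1) -> 0 <= prodn n f <= 1.
Proof.
  induction n; simpl; intros H; [lra|].
  destruct IHn as [A B]. intros; apply H; lia.
  destruct (H n) as [C D]; [lia|]. split; [apply Rmult_le_pos; auto|].
  rewrite <- (Rmult_1_l 1). apply Rmult_le_compat; auto.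
Qed.

Lemma lin_eval_uterms K q j h :
  lin_eval (uterms K q j) h = uval (h K - h (K+1)%nat) (h q) j.
Proof. destruct j as [|[|j]]; simpl; field. Qed.

Section Net.
Variables (d W K m L : nat) (sg : nat -> nat) (x : nat -> R).
Hypothesis HK : (2 <= K)%nat.
Hypothesis HW : (K + 11 <= W)%nat.
Hypothesis Hsg : forall i, (sg i < d)%nat.
Hypothesis HL : L = (2 + (K-1)*(m+2))%nat.
Hypothesis Hx : forall i, 0 <= x (sg i) <= 1.

Let F i := x (sg i).
Let wt := fun l i j => lin_coef (T K m L sg l i) j.
Let h := hidden d W wt (Bs K m L) x.

Lemma Hstep l l' i : l = S l' -> h l i = relu (lin_eval (T K m L sg l i) (h l') + Bs K m L l i).
Proof. intros ->. unfold h, wt. apply hidden_eq; auto; lia. Qed.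

Definition Inv (b : nat) (hv : nat -> R) : Prop :=
  (forall i, (i < K)%nat -> hv i = F i) /\ 0 <= hv K - hv (K+1)%nat <= 1 /\
  Rabs (hv K - hv (K+1)%nat - prodn (b+1) F) <= INR b * (/4)^m.

Lemma Inv_base : Inv 0 (h 1%nat).
Proof.
  assert (E : forall i, T K m L sg 1 i = IT K sg i /\ Bs K m L 1 i = 0) by (intros; split; reflexivity).
  assert (H1 : forall i, (i < K)%nat -> h 1%nat i = F i).
  { intros i Hi. rewrite (Hstep 1 0) by auto. destruct (E i) as [-> ->].
    unfold IT. destruct (Nat.ltb_spec i K); [|lia]. simpl. unfold F.
    change (h O) with x. rewrite relu_pos; [ring| specialize (Hx i); lra]. }
  assert (HKv : h 1%nat K = F 0%nat).
  { rewrite (Hstep 1 0) by auto. destruct (E K) as [-> ->].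
    unfold IT. nat_cases. simpl. unfold F. change (h O) with x.
    rewrite relu_pos; [ring| specialize (Hx 0%nat); lra]. }
  assert (HK1 : h 1%nat (K+1)%nat = 0).
  { rewrite (Hstep 1 0) by auto. destruct (E (K+1)%nat) as [-> ->].
    unfold IT. nat_cases. simpl. apply relu_neg; lra. }
  split; [exact H1|]. rewrite HKv, HK1. simpl.
  pose proof (Hx 0%nat). unfold F. split; [lra|].
  replace (x (sg 0%nat) - 0 - 1 * x (sg 0%nat)) with 0 by ring. rewrite Rabs_R0. lra.
Qed.


Ltac congr_relu := match goal with |- relu ?a = relu ?b => replace a with b by lra; reflexivity end.

Lemma Inv_block b : (b + 1 <= K - 1)%nat -> Inv b (h (1 + b*(m+2))%nat) -> Inv (b+1) (h (1 + (b+1)*(m+2))%nat).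
Proof.
  intros Hb [IF [Ip Ie]].
  set (l0 := (1 + b*(m+2))%nat) in *.
  set (p := h l0 K - h l0 (K+1)%nat) in *.
  set (z := F (b+1)%nat).
  assert (Hz : 0 <= z <= 1) by apply Hx.
  assert (Hmul : ((b+1)*(m+2) <= (K-1)*(m+2))%nat) by (apply Nat.mul_le_mono_r; lia).
  assert (HTB : forall r i, (r < m+2)%nat ->
     T K m L sg (2 + b*(m+2) + r) i = BT K m (b+1) r i /\
     Bs K m L (2 + b*(m+2) + r) i = BB K m r i).
  { intros r i Hr. destruct (T_block K m L sg b r i Hr) as [A B]; [lia|].
    rewrite A, B. replace (Nat.min (b+1) (K-1)) with (b+1)%nat by lia. auto. }
  assert (Hzq : h l0 (b+1)%nat = z) by (apply IF; lia).
  assert (Sinv : forall s, (s <= m)%nat ->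
     (forall i, (i < K)%nat -> h (2 + b*(m+2) + s)%nat i = F i) /\
     forall j, (j < 3)%nat ->
       h (2 + b*(m+2) + s)%nat (K+2+j)%nat = acc (uval p z j) s /\
       h (2 + b*(m+2) + s)%nat (K+5+j)%nat = relu (ys (uval p z j) s) /\
       h (2 + b*(m+2) + s)%nat (K+8+j)%nat = relu (ys (uval p z j) s - 1/2)).
  { induction s as [|s IH]; intros Hs.
    - split.
      + intros i Hi. rewrite (Hstep _ l0) by (unfold l0; lia).
        destruct (HTB 0%nat i) as [-> ->]; [lia|].
        destruct (BT_fac K m (b+1) 0 i Hi) as [-> ->]. simpl.
        rewrite IF by auto. rewrite relu_pos; [ring| pose proof (Hx i); unfold F in *; lra].
      + intros j Hj.
        destruct (BT_init K m (b+1) j Hj) as [T1 [B1 [T2 [B2 [T3 B3]]]]].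
        pose proof (uval_range p z j Ip Hz) as Hu.
        split; [|split]; rewrite (Hstep _ l0) by (unfold l0; lia).
        * destruct (HTB 0%nat (K+2+j)%nat) as [-> ->]; [lia|]. rewrite T1, B1, lin_eval_uterms.
          rewrite Hzq. fold p. simpl. rewrite Rplus_0_r. apply relu_pos; lra.
        * destruct (HTB 0%nat (K+5+j)%nat) as [-> ->]; [lia|]. rewrite T2, B2, lin_eval_uterms.
          rewrite Hzq. fold p. simpl. congr_relu.
        * destruct (HTB 0%nat (K+8+j)%nat) as [-> ->]; [lia|]. rewrite T3, B3, lin_eval_uterms.
          rewrite Hzq. fold p. simpl. replace (uval p z j + -1 / 2) with (uval p z j - 1/2) by lra. reflexivity.
    - destruct IH as [IHF IHj]; [lia|].
      split.
      + intros i Hi. rewrite (Hstep _ (2 + b*(m+2) + s)%nat) by lia.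
        destruct (HTB (S s) i) as [-> ->]; [lia|].
        destruct (BT_fac K m (b+1) (S s) i Hi) as [-> ->]. simpl.
        rewrite IHF by auto. rewrite relu_pos; [ring| pose proof (Hx i); unfold F in *; lra].
      + intros j Hj.
        destruct (BT_step K m (b+1) (S s) j Hj) as [T1 [B1 [T2 [B2 [T3 B3]]]]]; [lia|lia|].
        pose proof (uval_range p z j Ip Hz) as Hu.
        destruct (IHj j Hj) as [HA [HB HC]].
        split; [|split]; rewrite (Hstep _ (2 + b*(m+2) + s)%nat) by lia.
        * destruct (HTB (S s) (K+2+j)%nat) as [-> ->]; [lia|]. rewrite T1, B1. cbn [lin_eval fold_right fst snd].
          rewrite HA, HB, HC. rewrite relu_pos.
          -- simpl acc. unfold gt. simpl. ring.
          -- replace (1 * acc (uval p z j) s + (-2 * (/ 4) ^ S s * relu (ys (uval p z j) s) +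
               (4 * (/ 4) ^ S s * relu (ys (uval p z j) s - 1 / 2) + 0)) + 0)
             with (acc (uval p z j) (S s)) by (simpl acc; unfold gt; simpl; ring).
             apply acc_nonneg; auto.
        * destruct (HTB (S s) (K+5+j)%nat) as [-> ->]; [lia|]. rewrite T2, B2. cbn [lin_eval fold_right fst snd].
          rewrite HB, HC. simpl ys. unfold gt. congr_relu.
        * destruct (HTB (S s) (K+8+j)%nat) as [-> ->]; [lia|]. rewrite T3, B3. cbn [lin_eval fold_right fst snd].
          rewrite HB, HC. simpl ys. unfold gt. congr_relu. }
  destruct (Sinv m (le_n m)) as [SF Sj].
  set (lm := (2 + b*(m+2) + m)%nat) in *.
  assert (Elast : (1 + (b+1)*(m+2) = 2 + b*(m+2) + (m+1))%nat) by lia.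
  rewrite Elast.
  destruct (Sj 0%nat) as [A0 _]; [lia|]. destruct (Sj 1%nat) as [A1 _]; [lia|].
  destruct (Sj 2%nat) as [A2 _]; [lia|].
  rewrite !Nat.add_0_r in A0.
  set (v := 2 * acc (uval p z 0) m - 2 * acc (uval p z 1) m - 2 * acc (uval p z 2) m).
  assert (HP1 : h (2 + b*(m+2) + (m+1))%nat K = relu v).
  { rewrite (Hstep _ lm) by (unfold lm; lia).
    destruct (HTB (m+1)%nat K) as [-> ->]; [lia|].
    destruct (BT_P1 K m (b+1)) as [-> ->]. unfold cterms; cbn [lin_eval fold_right fst snd].
    replace (K+3)%nat with (K+2+1)%nat by lia. replace (K+4)%nat with (K+2+2)%nat by lia.
    rewrite A0, A1, A2. unfold v. f_equal; ring. }
  assert (HP2 : h (2 + b*(m+2) + (m+1))%nat (K+1)%nat = relu (v - 1)).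
  { rewrite (Hstep _ lm) by (unfold lm; lia).
    destruct (HTB (m+1)%nat (K+1)%nat) as [-> ->]; [lia|].
    destruct (BT_P2 K m (b+1)) as [-> ->]. unfold cterms; cbn [lin_eval fold_right fst snd].
    replace (K+3)%nat with (K+2+1)%nat by lia. replace (K+4)%nat with (K+2+2)%nat by lia.
    rewrite A0, A1, A2. unfold v. f_equal; ring. }
  split; [|rewrite HP1, HP2].
  { intros i Hi. rewrite (Hstep _ lm) by (unfold lm; lia).
    destruct (HTB (m+1)%nat i) as [-> ->]; [lia|].
    destruct (BT_fac K m (b+1) (m+1) i Hi) as [-> ->]. simpl.
    rewrite SF by auto. rewrite relu_pos; [ring| pose proof (Hx i); unfold F in *; lra]. }
  assert (Hpz : 0 <= p * z <= 1).
  { split. apply Rmult_le_pos; lra. rewrite <- (Rmult_1_l 1). apply Rmult_le_compat; lra. }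
  destruct (clamp_prop v (p*z) Hpz) as [Cr Ce]. unfold clampv in Cr, Ce.
  split; [exact Cr|].
  pose proof (mult_err p z m Ip Hz) as Me. fold v in Me.
  replace (b+1+1)%nat with (S (b+1)) by lia. simpl prodn. fold z.
  replace (relu v - relu (v - 1) - prodn (b + 1) F * z) with
     ((relu v - relu (v - 1) - p * z) + (p - prodn (b+1) F) * z) by ring.
  eapply Rle_trans; [apply Rabs_triang|]. rewrite Rabs_mult.
  rewrite (Rabs_pos_eq z) by lra.
  assert (Rabs (p - prodn (b+1) F) * z <= Rabs (p - prodn (b+1) F)).
  { pose proof (Rabs_pos (p - prodn (b+1) F)). nra. }
  rewrite plus_INR. simpl INR. lra.
Qed.


Lemma Inv_all b : (b <= K - 1)%nat -> Inv b (h (1 + b*(m+2))%nat).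
Proof.
  induction b; intros Hb.
  - simpl. apply Inv_base.
  - replace (S b) with (b+1)%nat by lia. apply Inv_block; [lia|]. apply IHb; lia.
Qed.

Lemma net_err : Rabs (realize d W L wt (Bs K m L) x - prodn K F) <= INR (K-1) * (/4)^m.
Proof.
  destruct (Inv_all (K-1) (le_n _)) as [_ [_ He]].
  set (P := ((K-1)*(m+2))%nat) in *.
  unfold realize.
  assert (HL1 : (L - 1 = 1 + (K-1)*(m+2))%nat) by lia.
  assert (HIn : in_dim d W L = W) by (unfold in_dim; destruct (Nat.eqb_spec L 1); [lia|auto]).
  rewrite HIn. unfold wt. rewrite rsum_lin.
  2:{ intros t Ht. rewrite <- HIn. exact (T_ok d W K m L sg ltac:(lia) HW Hsg L 0 t Ht). }
  assert (ET : T K m L sg L 0 = OT K 0) by (unfold T; destruct (Nat.eqb_spec L 1); [lia|]; rewrite Nat.eqb_refl; auto).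
  assert (EB : Bs K m L L 0 = 0) by (unfold Bs; destruct (Nat.eqb_spec L 1); [lia|]; rewrite Nat.eqb_refl; auto).
  rewrite ET, EB. unfold OT. simpl. rewrite HL1. fold h.
  replace (K - 1 + 1)%nat with K in He by lia.
  assert (Eq: forall a c e, 1*a + (-1*c + 0) + 0 - e = a - c - e) by (intros; ring).
  rewrite Eq. unfold h, P in He.
  exact He.
Qed.

End Net.

Lemma nat_ceil t : exists m : nat, t <= INR m /\ INR m <= Rmax 0 (t+1).
Proof.
  destruct (archimed t) as [H1 H2]. destruct (Z_le_gt_dec 0 (up t)).
  - exists (Z.to_nat (up t)). rewrite INR_IZR_INZ, Z2Nat.id by auto. split; [lra|].
    eapply Rle_trans; [|apply Rmax_r]; lra.
  - exists 0%nat. simpl. assert (IZR (up t) <= -1) by (apply IZR_le; lia).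
    split; [lra| apply Rmax_l].
Qed.

Lemma exp_le a b : a <= b -> exp a <= exp b.
Proof. intros H; destruct (Rle_lt_or_eq_dec _ _ H) as [H'|H']; [left; apply exp_increasing; auto| subst; lra]. Qed.

Lemma ln_ge0 y : 1 <= y -> 0 <= ln y.
Proof.
  intros H; destruct (Rle_lt_or_eq_dec _ _ H) as [H'|H'].
  - rewrite <- ln_1. left. apply ln_increasing; lra.
  - subst. rewrite ln_1. lra.
Qed.

Lemma ln4_gt1 : 1 < ln 4.
Proof.
  replace 4 with (2*2) by ring. rewrite ln_mult by lra. pose proof ln_lt_2. lra.
Qed.

Lemma sg_lt d alpha i : (1 <= d)%nat -> (nth i (flist d alpha) O < d)%nat.
Proof.
  intros Hd. destruct (Nat.lt_ge_cases i (length (flist d alpha))).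
  - apply (flist_lt d alpha). apply nth_In; auto.
  - rewrite nth_overflow by auto. lia.
Qed.

Theorem lemma9 (d s : nat) (alpha : nat -> nat)
  (hd : (1 <= d)%nat) (hs : (1 <= s)%nat) (habar : (2 <= nsum d alpha)%nat) :
  let a := Nat.log2_up (nsum d alpha) in
  exists C : R, 0 < C /\
    forall eps : R, eps_admissible a eps ->
      exists (L : nat) (wt : nat -> nat -> nat -> R) (bs : nat -> nat -> R),
        (1 <= L)%nat /\
        INR L <= C * Rmax 1 (ln ((3 ^ a - 1) / (2 * eps))) /\
        weight_bounded d (21 * 2 ^ (a - 1)) L wt bs C /\
        forall x : nat -> R, (forall i, (i < d)%nat -> 0 <= x i <= 1) ->
          Rabs (realize d (21 * 2 ^ (a - 1)) L wt bs x - monomial d alpha x) <= eps.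
Proof.
  intros a.
  set (K := nsum d alpha) in *.
  set (fl := flist d alpha).
  set (sg := fun i => nth i fl O).
  set (W := (21 * 2 ^ (a - 1))%nat).
  assert (Ha : (1 <= a)%nat /\ (K <= 2 ^ a)%nat).
  { destruct (Nat.log2_up_spec K) as [H1 H2]; [lia|]. fold a in H1, H2.
    split; auto. destruct a; [simpl in H2; lia| lia]. }
  assert (HW : (K + 11 <= W)%nat).
  { destruct Ha as [Ha1 Ha2]. unfold W.
    replace a with (S (a-1)) in Ha2 by lia. rewrite Nat.pow_succ_r' in Ha2.
    pose proof (Nat.pow_nonzero 2 (a-1)). lia. }
  set (Kr := INR K).
  assert (HKr : 2 <= Kr) by (unfold Kr; replace 2 with (INR 2) by (simpl; lra); apply le_INR; lia).
  assert (HlnK : 0 <= ln Kr) by (apply ln_ge0; lra).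
  exists (Rmax 8 (2 + (Kr-1)*(ln Kr + 4))).
  split; [eapply Rlt_le_trans; [|apply Rmax_l]; lra|].
  intros eps [Heps _].
  set (t := ln (Kr/eps) / ln 4).
  destruct (nat_ceil t) as [m [Hm1 Hm2]].
  set (L := (2 + (K-1)*(m+2))%nat).
  exists L, (fun l i j => lin_coef (T K m L sg l i) j), (Bs K m L).
  pose proof ln4_gt1 as Hl4.
  split; [unfold L; set (P := ((K-1)*(m+2))%nat); lia|].
  split.
  {
    set (M := Rmax 1 (ln ((3 ^ a - 1) / (2 * eps)))).
    assert (HM1 : 1 <= M) by apply Rmax_l.
    assert (H3a : 3 <= 3 ^ a).
    { replace 3 with (3^1) at 1 by ring. apply Rle_pow; [lra| lia]. }
    assert (HR0 : 0 <= ln ((3^a - 1)/2)) by (apply ln_ge0; lra).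
    assert (Hinv : ln (/ eps) <= M).
    { eapply Rle_trans; [|apply Rmax_r].
      replace ((3 ^ a - 1) / (2 * eps)) with (((3^a - 1)/2) * / eps) by (field; lra).
      rewrite ln_mult by (try apply Rinv_0_lt_compat; lra). lra. }
    assert (Ht : t <= ln Kr + M).
    { unfold t. change (Kr/eps) with (Kr * /eps). rewrite ln_mult by (try apply Rinv_0_lt_compat; lra).
      destruct (Rle_lt_dec 0 (ln Kr + ln (/ eps))) as [P|P].
      - apply Rle_trans with (ln Kr + ln (/eps)); [|lra].
        unfold Rdiv. rewrite <- (Rmult_1_r (ln Kr + ln (/ eps))) at 2.
        apply Rmult_le_compat_l; auto. rewrite <- Rinv_1. apply Rinv_le_contravar; lra.
      - assert ((ln Kr + ln (/ eps)) / ln 4 < 0).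
        { unfold Rdiv. apply Rmult_neg_pos; [lra| apply Rinv_0_lt_compat; lra]. }
        lra. }
    assert (Hm : INR m <= ln Kr + M + 1).
    { eapply Rle_trans; [exact Hm2|]. apply Rmax_lub; lra. }
    unfold L. rewrite plus_INR, mult_INR, plus_INR, minus_INR by lia.
    fold Kr. simpl (INR 2). replace (INR 1) with 1 by reflexivity.
    eapply Rle_trans with ((2 + (Kr - 1) * (ln Kr + 4)) * M).
    - assert (0 <= (Kr - 1) * (ln Kr * (M - 1))) by (apply Rmult_le_pos; [lra| apply Rmult_le_pos; lra]).
      assert ((Kr - 1) * (INR m + 2) <= (Kr - 1) * (ln Kr + M + 3)) by (apply Rmult_le_compat_l; lra).
      nra.
    - apply Rmult_le_compat_r; [lra| apply Rmax_r]. }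
  split.
  {
    intros l Hl i Hi. split.
    - eapply Rle_trans; [apply Bs_abs| apply Rmax_l].
    - intros j Hj. eapply Rle_trans; [apply lin_coef_bound|].
      eapply Rle_trans; [apply T_abs| apply Rmax_l]. }
  intros x Hx.
  assert (Hsg : forall i, (sg i < d)%nat) by (intros; apply sg_lt; auto).
  assert (Hx' : forall i, 0 <= x (sg i) <= 1) by (intros; apply Hx; auto).
  pose proof (net_err d W K m L sg x ltac:(lia) HW Hsg eq_refl Hx') as He.
  rewrite monomial_prodl, prodl_prodn. fold fl. unfold fl at 1. rewrite flist_len. fold K.
  eapply Rle_trans; [exact He|].
  assert (H4 : Kr / eps <= 4 ^ m).
  { rewrite <- Rpower_pow by lra. unfold Rpower.
    rewrite <- (exp_ln (Kr/eps)) by (apply Rdiv_lt_0_compat; lra).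
    apply exp_le. unfold t in Hm1.
    apply Rmult_le_compat_r with (r := ln 4) in Hm1; [|lra].
    unfold Rdiv in Hm1. rewrite Rmult_assoc, Rinv_l, Rmult_1_r in Hm1 by lra.
    unfold Rdiv. lra. }
  rewrite minus_INR by lia. fold Kr. replace (INR 1) with 1 by reflexivity.
  rewrite pow_inv.
  assert (H4p : 0 < 4 ^ m) by (apply pow_lt; lra).
  apply Rle_trans with (Kr * / 4 ^ m).
  { apply Rmult_le_compat_r; [left; apply Rinv_0_lt_compat; lra| lra]. }
  apply Rmult_le_reg_r with (4 ^ m); auto.
  rewrite Rmult_assoc, Rinv_l, Rmult_1_r by lra.
  apply Rmult_le_compat_r with (r := eps) in H4; [|lra].
  unfold Rdiv in H4. rewrite Rmult_assoc, Rinv_l, Rmult_1_r in H4 by lra. lra.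
Qed.
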